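(* Let $m\ge 1$, $0\le\rho<\tfrac12$, and let $P_1\ge P_2\ge\dots\ge P_{2^m}$ be a probability distribution on $2^m$ words $\mathbf{w}_1,\dots,\mathbf{w}_{2^m}\in\{0,1\}^m$. Define $P_k^d=\sum_{j}\rho^{d(k,j)}(1-\rho)^{m-d(k,j)}P_j$, where $d(k,j)$ is the Hamming distance between $\mathbf{w}_k$ and $\mathbf{w}_j$, and assume $P_1^d\ge P_2^d\ge\dots\ge P_{2^m}^d$. Fix $1\le i<2^m$ and let $(N_i^e(t),N_i^d(t))_{t\ge t_0}$ be a Markov chain on $\mathbb{Z}^2$ with i.i.d. steps, where the probability $P^i_{\{x,y\}}$ of moving from $(N_i^e,N_i^d)$ to $(N_i^e+x,N_i^d+y)$, $x,y\in\{-1,0,1\}$, is: $P^i_{\{1,1\}}=(1-\rho)^{m}P_i$; $P^i_{\{-1,-1\}}=(1-\rho)^mP_{i+1}$; $P^i_{\{1,-1\}}=\rho^{d(i,i+1)}(1-\rho)^{m-d(i,i+1)}P_i$; $P^i_{\{-1,1\}}=\rho^{d(i+1,i)}(1-\rho)^{m-d(i+1,i)}P_{i+1}$; $P^i_{\{1,0\}}=\sum_{j\ne i,i+1}\rho^{d(i,j)}(1-\rho)^{m-d(i,j)}P_i$; $P^i_{\{-1,0\}}=\sum_{j\ne i,i+1}\rho^{d(i+1,j)}(1-\rho)^{m-d(i+1,j)}P_{i+1}$; $P^i_{\{0,1\}}=\sum_{j\ne i,i+1}\rho^{d(i,j)}(1-\rho)^{m-d(i,j)}P_j$; $P^i_{\{0,-1\}}=\sum_{j\ne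 i,i+1}\rho^{d(i+1,j)}(1-\rho)^{m-d(i+1,j)}P_j$; and $P^i_{\{0,0\}}=1-\sum_{(x,y)\ne(0,0)}P^i_{\{x,y\}}$. Suppose $N_i^e(t_0)>0$ and $N_i^d(t_0)>0$ (a stable pair). Let $Q_i(N_i^e(t_0),N_i^d(t_0))$ be the probability that there exists $t>t_0$ with $N_i^e(t)=0$ or $N_i^d(t)=0$. Then $$Q_i(N_i^e(t_0),N_i^d(t_0))\le\left(\frac{P_{i+1}}{P_i}\right)^{N_i^e(t_0)}+\left(\frac{P_{i+1}^d}{P_i^d}\right)^{N_i^d(t_0)}.$$
   Context: This models a rate-1 direct shaping code with parsing length $m$ on SLC flash modeled as a binary symmetric channel with crossover probability $\rho$: i.i.d. input words $\mathbf{w}_k$ with probabilities $P_k$; $N_i^e(t)=n_i^e(t)-n_{i+1}^e(t)$ is the difference between the encoder counts of the $i$th and $(i+1)$st words and $N_i^d(t)$ the analogous difference of decoder counts; when the dictionary is stable, $P_k^d$ is the probability that the decoder outputs $\mathbf{w}_k$. The pair's evolution is modeled by the random walk in the claim. *)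

(* Defs.v *)
From HB Require Import structures.
From mathcomp Require Import all_boot all_order all_algebra.
From mathcomp Require Import classical_sets reals.
Set Implicit Arguments. Unset Strict Implicit. Unset Printing Implicit Defensive.
Import Order.TTheory GRing.Theory Num.Theory.
Local Open Scope ring_scope.

Definition hamming (m : nat) (u v : m.-tuple bool) : nat :=
  (\sum_(k < m) (tnth u k != tnth v k))%N.

Section Shaping.
Variables (R : realType) (m : nat) (rho : R)
  (P : 'I_(2^m) -> R) (w : 'I_(2^m) -> m.-tuple bool).

Definition bscw (k j : 'I_(2^m)) : R :=
  let d := hamming (w k) (w j) in rho ^+ d * (1 - rho) ^+ (m - d).

Definition Pdec (k : 'I_(2^m)) : R := \sum_j bscw k j * P j.

Variables (i i' : 'I_(2^m)).  (* i' is the index i+1 *)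

Definition Srow (k : 'I_(2^m)) : R :=
  \sum_(j | (j != i) && (j != i')) bscw k j.
Definition SrowP (k : 'I_(2^m)) : R :=
  \sum_(j | (j != i) && (j != i')) bscw k j * P j.

Definition trans_nz (x y : int) : R :=
  if (x == 1) && (y == 1) then (1 - rho) ^+ m * P i
  else if (x == -1) && (y == -1) then (1 - rho) ^+ m * P i'
  else if (x == 1) && (y == -1) then bscw i i' * P i
  else if (x == -1) && (y == 1) then bscw i' i * P i'
  else if (x == 1) && (y == 0) then Srow i * P i
  else if (x == -1) && (y == 0) then Srow i' * P i'
  else if (x == 0) && (y == 1) then SrowP i
  else if (x == 0) && (y == -1) then SrowP i'
  else 0.

Definition steps : seq int := [:: -1; 0; 1].

Definition trans (x y : int) : R :=
  if (x == 0) && (y == 0) then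
    1 - \sum_(x' <- steps) \sum_(y' <- steps) trans_nz x' y'
  else trans_nz x y.

(* probability that the walk started at (a,b) has a coordinate equal to 0
   at some time t in {t0+1, ..., t0+n} *)
Fixpoint hit_within (n : nat) (a b : int) : R :=
  match n with
  | 0 => 0
  | n'.+1 => \sum_(x <- steps) \sum_(y <- steps)
       trans x y * (if (a + x == 0) || (b + y == 0) then 1
                    else hit_within n' (a + x) (b + y))
  end.

(* Q_i(a,b): probability that some t > t0 has a coordinate equal to 0;
   by continuity of probability this is the supremum of the increasing
   finite-horizon hitting probabilities. *)
Definition Qhit (a b : int) : R := sup (range (fun n => hit_within n a b)).

End Shaping.

(* Main.v *)
Require Import Defs.
From HB Require Import structures.
From mathcomp Require Import all_boot all_order all_algebra.
From mathcomp Require Import classical_sets reals.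
From mathcomp Require Import zify ring lra.
Import Order.TTheory GRing.Theory Num.Theory.
Local Open Scope ring_scope.

Lemma ham_sym m (u v : m.-tuple bool) : hamming u v = hamming v u.
Proof. by rewrite /hamming; apply: eq_bigr => k _; rewrite eq_sym. Qed.

Lemma ham_refl m (u : m.-tuple bool) : hamming u u = 0%N.
Proof. by apply: big1 => k _; rewrite eqxx. Qed.

Lemma ham_card m (u v : m.-tuple bool) :
  hamming u v = #|[pred k | tnth u k != tnth v k]|.
Proof.
rewrite /hamming -sum1_card [RHS]big_mkcond /=; apply: eq_bigr => k _.
by rewrite inE; case: (tnth u k != tnth v k).
Qed.

Lemma G_prod (R : comRingType) (rho : R) m (u v : m.-tuple bool) :
  rho ^+ hamming u v * (1 - rho) ^+ (m - hamming u v) =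
  \prod_(k < m) (if tnth u k != tnth v k then rho else 1 - rho).
Proof.
rewrite (bigID (fun k => tnth u k != tnth v k)) /=.
rewrite (eq_bigr (fun=> rho)); last by move=> k ->.
rewrite [X in _ = _ * X](eq_bigr (fun=> 1-rho)); last by move=> k /negbTE ->.
rewrite !prodr_const ham_card; congr (_ * _ ^+ _).
have := cardC [pred k | tnth u k != tnth v k]; rewrite card_ord => hc.
rewrite -{1}hc addKn; apply: eq_card => k; by rewrite !inE.
Qed.

Lemma G_sum (R : comRingType) (rho : R) m (u : m.-tuple bool) :
  \sum_(v : m.-tuple bool) rho ^+ hamming u v * (1 - rho) ^+ (m - hamming u v) = 1.
Proof.
have h1 : \prod_(k < m) \sum_(x : bool) (if tnth u k != x then rho else 1 - rho) = 1.
  rewrite big1 // => k _; rewrite big_bool /=.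
  by case: (tnth u k) => /=; rewrite ?addrNK // addrC subrK.
apply: etrans h1; rewrite bigA_distr_bigA /=.
rewrite (reindex (fun f : {ffun 'I_m -> bool} => [tuple f k | k < m])) /=.
  apply: eq_bigr => f _; rewrite G_prod; apply: eq_bigr => k _.

  by rewrite tnth_mktuple.
exists (fun v : m.-tuple bool => [ffun k => tnth v k]) => [f _|v _].
  by apply/ffunP => k; rewrite ffunE tnth_mktuple.
by apply: eq_from_tnth => k; rewrite tnth_mktuple ffunE.
Qed.

Section Main.
Variables (R : realType) (m : nat) (rho : R) (P : 'I_(2^m) -> R)
  (w : 'I_(2^m) -> m.-tuple bool) (i i' : 'I_(2^m)).
Hypotheses (rho0 : 0 <= rho) (rho1 : rho <= 1) (winj : injective w)
  (P0 : forall k, 0 <= P k) (P1 : \sum_k P k = 1) (ii' : i != i').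

Local Notation bscw := (bscw rho w).

Lemma bscw_ge0 k j : 0 <= bscw k j.
Proof. by rewrite /Defs.bscw mulr_ge0 // exprn_ge0 // subr_ge0. Qed.

Lemma bscw_sym k j : bscw k j = bscw j k.
Proof. by rewrite /Defs.bscw ham_sym. Qed.

Lemma bscw_diag k : bscw k k = (1 - rho) ^+ m.
Proof. by rewrite /Defs.bscw ham_refl expr0 mul1r subn0. Qed.

Lemma row_sum k : \sum_j bscw k j = 1.
Proof.
have wbij : bijective w.
  by apply: inj_card_bij => //; rewrite card_tuple card_bool card_ord.
rewrite -(@G_sum R rho m (w k)) [RHS](reindex w) //; exact: onW_bij.
Qed.

Lemma col_sum j : \sum_k bscw k j = 1.
Proof. by rewrite -(row_sum j); apply: eq_bigr => k _; rewrite bscw_sym. Qed.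

Lemma split2 (F : 'I_(2^m) -> R) :
  \sum_j F j = F i + F i' + \sum_(j | (j != i) && (j != i')) F j.
Proof. by rewrite (bigD1 i) //= (bigD1 i') 1?eq_sym //= addrA. Qed.

Lemma Srow_eq k : Srow rho w i i' k = 1 - bscw k i - bscw k i'.
Proof. by rewrite -(row_sum k) split2 /Srow; ring. Qed.

Lemma Pdec_eq k : Pdec rho P w k = bscw k i * P i + bscw k i' * P i' + SrowP rho P w i i' k.
Proof. by rewrite /Pdec split2. Qed.

Lemma SrowP_le : SrowP rho P w i i' i + SrowP rho P w i i' i' <= 1 - P i - P i'.
Proof.
rewrite -P1 split2 /SrowP -big_split /=.
have -> : forall a b c : R, a + b + c - a - b = c by move=> *; ring.
apply: ler_sum => j hj; rewrite -mulrDl ler_piMl //.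
have := col_sum j; rewrite split2 => h.
have : 0 <= \sum_(k | (k != i) && (k != i')) bscw k j by apply: sumr_ge0 => *; exact: bscw_ge0.
lra.
Qed.

Local Notation tr := (trans rho P w i i').
Local Notation u := ((1 - rho) ^+ m).
Local Notation Si := (Srow rho w i i' i).
Local Notation Si' := (Srow rho w i i' i').
Local Notation SPi := (SrowP rho P w i i' i).
Local Notation SPi' := (SrowP rho P w i i' i').

Lemma tmm : tr (-1) (-1) = u * P i'. Proof. by rewrite /trans /trans_nz. Qed.
Lemma tm0 : tr (-1) 0 = Si' * P i'. Proof. by rewrite /trans /trans_nz. Qed.
Lemma tm1 : tr (-1) 1 = bscw i i' * P i'. Proof. by rewrite /trans /trans_nz /= bscw_sym. Qed.
Lemma t0m : tr 0 (-1) = SPi'. Proof. by rewrite /trans /trans_nz. Qed.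
Lemma t01 : tr 0 1 = SPi. Proof. by rewrite /trans /trans_nz. Qed.
Lemma t1m : tr 1 (-1) = bscw i i' * P i. Proof. by rewrite /trans /trans_nz. Qed.
Lemma t10 : tr 1 0 = Si * P i. Proof. by rewrite /trans /trans_nz. Qed.
Lemma t11 : tr 1 1 = u * P i. Proof. by rewrite /trans /trans_nz. Qed.
Lemma t00 : tr 0 0 = 1 - (u * P i' + Si' * P i' + bscw i i' * P i' + SPi' + SPi
   + bscw i i' * P i + Si * P i + u * P i).
Proof.
rewrite /trans /= !big_cons !big_nil /trans_nz /= bscw_sym; congr (_ - _); ring.
Qed.

Lemma t00_ge0 : 0 <= tr 0 0.
Proof.
rewrite t00 !Srow_eq bscw_diag (bscw_sym i' i) bscw_diag.
have := SrowP_le; lra.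
Qed.

Lemma tr_ge0 x y : x \in steps -> y \in steps -> 0 <= tr x y.
Proof.
have hS : forall k, 0 <= Srow rho w i i' k by move=> k; apply: sumr_ge0 => *; exact: bscw_ge0.
have hSP : forall k, 0 <= SrowP rho P w i i' k.
  by move=> k; apply: sumr_ge0 => *; apply: mulr_ge0; [exact: bscw_ge0|exact: P0].
have hu : 0 <= u by rewrite exprn_ge0 // subr_ge0.
rewrite !inE => /or3P[] /eqP -> /or3P[] /eqP ->;
  rewrite ?tmm ?tm0 ?tm1 ?t0m ?t01 ?t1m ?t10 ?t11 ?t00_ge0 //;
  apply: mulr_ge0 => //; exact: bscw_ge0.
Qed.


Lemma hit_bound (r s : R) : 0 <= r -> 0 <= s -> P i * r = P i' ->
  Pdec rho P w i * s = Pdec rho P w i' ->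
  forall n (a b : int), 0 < a -> 0 < b ->
  hit_within rho P w i i' n a b <= r ^+ `|a|%N + s ^+ `|b|%N.
Proof.
move=> r0 s0 hr hs; elim=> [|n IH] a b ha hb /=.
  by rewrite addr_ge0 // exprn_ge0.
have hbr : forall a' b' : int, 0 <= a' -> 0 <= b' ->
    (if (a' == 0) || (b' == 0) then 1 else hit_within rho P w i i' n a' b')
    <= r ^+ `|a'|%N + s ^+ `|b'|%N.
  move=> a' b' ha' hb'; case: eqP => [->|/eqP na] /=.
    by rewrite expr0 lerDl exprn_ge0.
  case: eqP => [->|/eqP nb] /=.
    by rewrite expr0 lerDr exprn_ge0.
  by apply: IH; rewrite lt_def ?na ?nb.
apply: (@le_trans _ _ (\sum_(x <- steps) \sum_(y <- steps)
   tr x y * (r ^+ absz (a + x) + s ^+ absz (b + y)))).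
  rewrite big_seq [X in _ <= X]big_seq; apply: ler_sum => x hx.
  rewrite big_seq [X in _ <= X]big_seq; apply: ler_sum => y hy.
  apply: ler_wpM2l; first exact: tr_ge0.
  apply: hbr.
    by move: hx; rewrite !inE => /or3P[] /eqP ->; lia.
  by move: hy; rewrite !inE => /or3P[] /eqP ->; lia.
have [A hA] : exists A, `|a|%N = A.+1 by exists (`|a|.-1)%N; lia.
have [B hB] : exists B, `|b|%N = B.+1 by exists (`|b|.-1)%N; lia.
have ea1 : absz (a + -1) = A by lia.
have ea2 : absz (a + 1) = A.+2 by lia.
have eb1 : absz (b + -1) = B by lia.
have eb2 : absz (b + 1) = B.+2 by lia.
rewrite !big_cons !big_nil !addr0 ea1 ea2 eb1 eb2 hA hB.
rewrite tmm tm0 tm1 t0m t01 t1m t10 t11 t00 !Srow_eq bscw_diag (bscw_sym i' i) bscw_diag.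
have hSP' : SPi' = ((1 - rho) ^+ m * P i + bscw i i' * P i' + SPi) * s
   - bscw i i' * P i - (1 - rho) ^+ m * P i'.
  move: hs; rewrite (Pdec_eq i) (Pdec_eq i') bscw_diag bscw_diag (bscw_sym i' i) => ->.
  ring.
rewrite hSP' -hr !exprS le_eqVlt; apply/orP; left; apply/eqP.
ring.
Qed.

End Main.

Lemma ratio_eq (R : realType) (x y : R) : 0 <= y -> y <= x -> x * (y / x) = y.
Proof.
move=> y0 yx; have [x0|nx] := eqVneq x 0.
  by rewrite x0 mul0r; apply/eqP; rewrite eq_le y0 -x0 yx.
by rewrite mulrCA divff // mulr1.
Qed.

Theorem lemma1 (R : realType) (m : nat) (rho : R)
  (P : 'I_(2^m) -> R) (w : 'I_(2^m) -> m.-tuple bool)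
  (i i' : 'I_(2^m)) (a b : nat) :
  (1 <= m)%N ->
  0 <= rho -> rho < 1 / 2 ->
  injective w ->
  (forall k, 0 <= P k) -> \sum_k P k = 1 ->
  (forall k l : 'I_(2^m), (k <= l)%N -> P l <= P k) ->
  (forall k l : 'I_(2^m), (k <= l)%N -> Pdec rho P w l <= Pdec rho P w k) ->
  val i' = (val i).+1 ->
  (0 < a)%N -> (0 < b)%N ->
  Qhit rho P w i i' a%:Z b%:Z <=
    (P i' / P i) ^+ a + (Pdec rho P w i' / Pdec rho P w i) ^+ b.
Proof.
move=> m1 rho0 rho2 winj P0 P1 Pmon Dmon hii ha hb.
have rho1 : rho <= 1 by lra.
have ii' : i != i' by apply/eqP => h; move: hii; rewrite h; lia.
have le_ii : (i <= i')%N by rewrite hii.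
have D0 : forall k, 0 <= Pdec rho P w k.
  move=> k; apply: sumr_ge0 => j _; apply: mulr_ge0; last exact: P0.
  exact: bscw_ge0.
have hr := ratio_eq _ _ _ (P0 i') (Pmon _ _ le_ii).
have hs := ratio_eq _ _ _ (D0 i') (Dmon _ _ le_ii).
rewrite /Qhit; apply: ge_sup.
  by exists (hit_within rho P w i i' 0 a b); exists 0%N.
move=> _ [n _ <-].
have := @hit_bound R m rho P w i i' rho0 rho1 winj P0 P1 ii' _ _
  (divr_ge0 (P0 i') (P0 i)) (divr_ge0 (D0 i') (D0 i)) hr hs n a b.
by apply; rewrite ltz_nat.
Qed.
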